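(* Fix an integer $k\ge 1$. Let $(X_1,\dots,X_n)$ be the $\{0,1\}$-valued Markov chain with $X_1=1$ and the following transitions for $1\le \ell\le n-1$: if $X_\ell=0$ then $X_{\ell+1}=1$, and if $X_\ell=1$ then $X_{\ell+1}$ equals $0$ or $1$ with probability $1/2$ each. Let $A\in\{0,1\}^{m\times n}$ have as rows $m$ independent realizations of this chain. Then every row of $A$ is a feasible measurement for the graph $\mathcal{G}^4_n$. Moreover, there is a function $g$ depending only on $k$ such that the following holds: if $m\ge g(k)\log n$, then the probability that $A$ identifies all $k$-sparse vectors in $\mathbb{R}^n$ tends to $1$ as $n\to\infty$. One admissible choice is $g(k)=(2k+1)2^{4k^2+2k-1}/(2k-1)!$.
   Context: $\mathcal{G}^4_n$ ($n\ge 5$) is the graph on $\{1,\dots,n\}$ in which each node $i$ is adjacent to $i\pm1$ and $i\pm2 \pmod n$. A row $a\in\{0,1\}^n$ is a feasible measurement for a graph $G$ if its support $\{j:a_j=1\}$ induces a connected subgraph of $G$. A vector $x\in\mathbb{R}^n$ is $k$-sparse if it has at most $k$ nonzero entries. $A$ identifies all $k$-sparse vectors if $Ax_1\neq Ax_2$ for every two distinct $k$-sparse vectors $x_1,x_2$. *)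

(* Defs.v *)
From Stdlib Require Import Reals ClassicalEpsilon.
From mathcomp Require Import all_boot.
Set Implicit Arguments. Unset Strict Implicit. Unset Printing Implicit Defensive.

(* Nodes of G^4_n are 0..n-1 (paper: 1..n). *)
Definition G4adj (n : nat) (i j : 'I_n) : bool :=
  (i != j) &&
  (((j + n - i) %% n)%N \in [:: 1; 2; n - 1; n - 2]%N).

Definition row01 (n : nat) := {ffun 'I_n -> bool}.

Definition feasible (n : nat) (a : row01 n) : Prop :=
  forall i j : 'I_n, a i -> a j ->
    connect [rel u v | [&& a u, a v & G4adj u v]] i j.

(* entry at natural index l (false outside range) *)
Definition at_ (n : nat) (a : row01 n) (l : nat) : bool :=
  match @insub nat (fun x => x < n) _ l with Some j => a j | None => false end.

(* Probability that one realization of the Markov chain equals a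
   (X_1 = 1; after a 0 comes a 1; after a 1 comes 0 or 1 w.p. 1/2). *)
Definition trans (x y : bool) : R :=
  if x then Rinv (INR 2) else (if y then R1 else R0).

Definition rowProb (n : nat) (a : row01 n) : R :=
  Rmult (if at_ a 0 then R1 else R0)
   (\big[Rmult/R1]_(l < n.-1) trans (at_ a l) (at_ a l.+1)).

Definition mat01 (m n : nat) := {ffun 'I_m -> row01 n}.

Definition matProb (m n : nat) (A : mat01 m n) : R :=
  \big[Rmult/R1]_(i < m) rowProb (A i).

Definition mulv (m n : nat) (A : mat01 m n) (x : 'I_n -> R) : 'I_m -> R :=
  fun i => \big[Rplus/R0]_(j < n) (if A i j then x j else R0).

Definition nonzero (r : R) : bool := if Req_EM_T r R0 then false else true.

Definition sparse (k n : nat) (x : 'I_n -> R) : Prop :=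
  #|[pred j | nonzero (x j)]| <= k.

Definition identifies (k m n : nat) (A : mat01 m n) : Prop :=
  forall x1 x2 : 'I_n -> R, sparse k x1 -> sparse k x2 -> x1 <> x2 ->
    mulv A x1 <> mulv A x2.

Definition indicator (P : Prop) : R :=
  if excluded_middle_informative P then R1 else R0.

Definition probIdent (k m n : nat) : R :=
  \big[Rplus/R0]_(A : mat01 m n) Rmult (matProb A) (indicator (identifies k A)).

Definition gk (k : nat) : R :=
  Rdiv (Rmult (INR (2 * k + 1)) (pow (INR 2) (4 * k * k + 2 * k - 1))) (INR ((2 * k - 1)`!)).

(* Main.v *)
Require Import Defs.
From Stdlib Require Import Reals.
From mathcomp Require Import all_boot.
From Stdlib Require Import Lra Lia ClassicalEpsilon FunctionalExtensionality.
From mathcomp Require Import zify.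
From HB Require Import structures.
Import Defs.

Lemma RplusA : associative Rplus. Proof. move=> x y z; ring. Qed.
Lemma RmultA : associative Rmult. Proof. move=> x y z; ring. Qed.
HB.instance Definition _ := Monoid.isComLaw.Build R R0 Rplus RplusA Rplus_comm Rplus_0_l.
HB.instance Definition _ := Monoid.isComLaw.Build R R1 Rmult RmultA Rmult_comm Rmult_1_l.
Lemma Rmult0r : left_zero R0 Rmult. Proof. move=> x; ring. Qed.
Lemma Rmultr0 : right_zero R0 Rmult. Proof. move=> x; ring. Qed.
HB.instance Definition _ := Monoid.isMulLaw.Build R R0 Rmult Rmult0r Rmultr0.
Lemma RmultDl : left_distributive Rmult Rplus. Proof. move=> x y z; ring. Qed.
Lemma RmultDr : right_distributive Rmult Rplus. Proof. move=> x y z; ring. Qed.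
HB.instance Definition _ := Monoid.isAddLaw.Build R Rmult Rplus RmultDl RmultDr.

Lemma at_E n (a : row01 n) (i : 'I_n) : at_ a i = a i.
Proof. rewrite /at_ insubT /=; first by [] ; move=> H; rewrite (_ : Sub _ _ = i) //; exact: val_inj. Qed.

Lemma at_out n (a : row01 n) l : (n <= l)%N -> at_ a l = false.
Proof. by move=> h; rewrite /at_ insubF // ltnNge h. Qed.

Lemma prod_zero (N : nat) (F : 'I_N -> R) (j : 'I_N) : F j = R0 ->
  \big[Rmult/R1]_(i < N) F i = R0.
Proof. by move=> h; rewrite (bigD1 j) //= h Rmult0r. Qed.

Lemma rowProb_pos n (a : row01 n) : Rgt (rowProb a) R0 ->
  at_ a 0 /\ forall l, (l.+1 < n)%N -> at_ a l || at_ a l.+1.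
Proof.
rewrite /rowProb => h; split.
  by move: h; case: (at_ a 0) => //; rewrite Rmult0r; lra.
move=> l hl; apply/negPn/negP; rewrite negb_or => /andP[h1 h2].
have hl' : (l < n.-1)%N by lia.
move: h; rewrite (@prod_zero _ _ (Ordinal hl')) /=; first by rewrite Rmultr0; lra.
by rewrite /trans (negbTE h1) (negbTE h2).
Qed.

Lemma G4adj_dn n (u v : 'I_n) : (5 <= n)%N -> (v < u)%N -> (u <= v + 2)%N -> G4adj u v.
Proof.
move=> hn h1 h2; rewrite /G4adj; apply/andP; split.
  by apply/eqP => e; move: h1; rewrite e ltnn.
have [e|e] : ((u:nat) = v + 1 \/ (u:nat) = v + 2)%N by lia.
  have -> : (v + n - u = n - 1)%N by lia.
  by rewrite modn_small ?inE ?eqxx ?orbT //; lia.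
have -> : (v + n - u = n - 2)%N by lia.
by rewrite modn_small ?inE ?eqxx ?orbT //; lia.
Qed.

Lemma G4adj_up n (u v : 'I_n) : (5 <= n)%N -> (u < v)%N -> (v <= u + 2)%N -> G4adj u v.
Proof.
move=> hn h1 h2; rewrite /G4adj; apply/andP; split.
  by apply/eqP => e; move: h1; rewrite e ltnn.
have [e|e] : ((v:nat) = u + 1 \/ (v:nat) = u + 2)%N by lia.
  have -> : (v + n - u = n + 1)%N by lia.
  rewrite (modnDl 1 n) modn_small ?inE ?eqxx //; lia.
have -> : (v + n - u = n + 2)%N by lia.
by rewrite (modnDl 2 n) modn_small ?inE ?eqxx ?orbT //; lia.
Qed.

Lemma feasible_part (n : nat) (a : row01 n) : (5 <= n)%N -> Rgt (rowProb a) R0 -> feasible a.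
Proof.
move=> hn /rowProb_pos [h0 hcons].
set e := [rel u v | [&& a u, a v & G4adj u v]].
have n0 : (0 < n)%N by lia.
pose z := Ordinal n0.
have az : a z by rewrite -at_E.
suff key : forall d (i : 'I_n), (i <= d)%N -> a i -> connect e z i /\ connect e i z.
  move=> i j ai aj.
  have [_ h1] := key i i (leqnn _) ai.
  have [h2 _] := key j j (leqnn _) aj.
  exact: connect_trans h1 h2.
elim=> [|d IH] i hid ai.
  have -> : i = z by apply: val_inj => /=; lia.
  by rewrite connect0.
case: (ltnP i d.+1) => hi; first by apply: IH.
have i1 : (0 < i)%N by lia.
have iln := ltn_ord i.
have hi1 : (i.-1 < n)%N by lia.
pose j := Ordinal hi1.
case aj: (a j).
  have [c1 c2] := IH j ltac:(rewrite /=; lia) aj.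
  split.
    apply: (connect_trans c1); apply: connect1; rewrite /= aj ai /=.
    by apply: G4adj_up => //=; lia.
  apply: connect_trans c2; apply: connect1; rewrite /= aj ai /=.
  by apply: G4adj_dn => //=; lia.
have i2 : (1 < i)%N.
  case: (ltnP 1 i) => // hh; have ij : val j = 0%N by rewrite /=; lia.
  by move: aj; rewrite -at_E ij h0.
have hi2 : (i.-2 < n)%N by lia.
pose j2 := Ordinal hi2.
have aj2 : a j2.
  have := hcons i.-2 ltac:(lia).
  have -> : (i.-2).+1 = j by rewrite /=; lia.
  by rewrite -[i.-2]/(val j2) !at_E aj orbF.
have [c1 c2] := IH j2 ltac:(rewrite /=; lia) aj2.
split.
  apply: (connect_trans c1); apply: connect1; rewrite /= aj2 ai /=.
  by apply: G4adj_up => //=; lia.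
apply: connect_trans c2; apply: connect1; rewrite /= aj2 ai /=.
by apply: G4adj_dn => //=; lia.
Qed.

Set Implicit Arguments. Unset Strict Implicit.

Fixpoint gseq {N} (c : row01 N) (l : nat) : bool :=
  match l with 0 => true | l'.+1 => ~~ gseq c l' || at_ c l' end.

Definition genrow n (c : row01 n.-1) : row01 n := [ffun i : 'I_n => gseq c i].

Definition famF n (a : row01 n) (l : 'I_n.-1) : pred bool :=
  if at_ a l then pred1 (at_ a l.+1) else (if at_ a l.+1 then predT else pred0).

Lemma at_genrow n (c : row01 n.-1) l : (l < n)%N -> at_ (genrow c) l = gseq c l.
Proof.
move=> hl; rewrite -[l]/(val (Ordinal hl)) at_E ffunE //.
Qed.

Lemma gen_char n (a : row01 n) (c : row01 n.-1) : (0 < n)%N ->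
  (genrow c == a) = at_ a 0 && (c \in family (famF a)).
Proof.
move=> n0; apply/eqP/andP.
  move=> <-; split; first by rewrite at_genrow.
  apply/familyP => l; have hl : (l.+1 < n)%N by have := ltn_ord l; lia.
  rewrite /famF !at_genrow //; last by lia.
  rewrite /= -at_E; case: (gseq c l) => /=; rewrite ?inE //.
move=> [h0 /familyP hf].
have key : forall l, (l < n)%N -> at_ a l = gseq c l.
  elim=> [|l IH] hl //=.
  have hl' : (l < n.-1)%N by lia.
  have := hf (Ordinal hl'); rewrite /famF /= -IH; last by lia.
  rewrite -[c (Ordinal hl')]at_E /=.
  by case: (at_ a l) => /=; [move/eqP|]; case: (at_ a l.+1).
apply/ffunP => i; rewrite ffunE -key // at_E //.
Qed.

Lemma iter_plus k x : iter k (Rplus x) R0 = Rmult (INR k) x.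
Proof. elim: k => [|k IH]; first by rewrite /=; ring. by rewrite iterS IH S_INR; ring. Qed.

Lemma iter_mult k x : iter k (Rmult x) R1 = pow x k.
Proof. elim: k => [|k IH] //=; rewrite IH; ring. Qed.

Lemma INR_prod (I : finType) (f : I -> nat) :
  INR (\prod_(i : I) f i) = \big[Rmult/R1]_(i : I) INR (f i).
Proof. by apply: (big_morph INR mult_INR). Qed.

Lemma card_famF n (a : row01 n) :
  #|family (famF a)| = \prod_(l : 'I_n.-1) #|famF a l|.
Proof. by rewrite card_family foldrE big_map big_enum. Qed.

Lemma rowProb_card n (a : row01 n) : (0 < n)%N ->
  rowProb a = Rmult (pow (/2) n.-1) (INR #|[pred c : row01 n.-1 | genrow c == a]|).
Proof.
move=> n0.
rewrite (eq_card (B := [pred c | at_ a 0 && (c \in family (famF a))])); last first.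
  by move=> c; rewrite !inE gen_char.
rewrite /rowProb; case: (at_ a 0); last by rewrite card0 /=; ring.
rewrite Rmult_1_l (eq_card (B := family (famF a))) // card_famF INR_prod.
rewrite -iter_mult -big_const_ord -big_split /=.
apply: eq_bigr => l _.
rewrite /famF /trans; case: (at_ a l); case: (at_ a l.+1) => /=;
  rewrite ?card1 ?card_bool ?card0 /=; try field.
Qed.

Lemma sum_const_pred (T : finType) (P : pred T) (x : R) :
  \big[Rplus/R0]_(i | P i) x = Rmult (INR #|P|) x.
Proof. by rewrite big_const iter_plus. Qed.

Lemma expect n (F : row01 n -> R) : (0 < n)%N ->
  \big[Rplus/R0]_(a : row01 n) Rmult (rowProb a) (F a) =
  Rmult (pow (/2) n.-1) (\big[Rplus/R0]_(c : row01 n.-1) F (genrow c)).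
Proof.
move=> n0.
rewrite (partition_big (@genrow n) xpredT) //= big_distrr /=.
apply: eq_bigr => a _.
rewrite (eq_bigr (fun _ => F a)); last by move=> c /eqP ->.
rewrite (rowProb_card a n0) sum_const_pred.
rewrite (eq_card (B := [pred c : row01 n.-1 | genrow c == a])) //.
by rewrite Rmult_assoc.
Qed.

Lemma INR_exp2 N : INR (2 ^ N) = pow 2 N.
Proof. elim: N => [|N IH] //=. by rewrite expnS mult_INR IH. Qed.

Lemma total_mass n : (0 < n)%N ->
  \big[Rplus/R0]_(a : row01 n) rowProb a = R1.
Proof.
move=> n0.
rewrite (eq_bigr (fun a => Rmult (rowProb a) R1)); last by move=> a _; ring.
rewrite expect // big_const iter_plus Rmult_1_r card_ffun card_bool card_ord.
rewrite INR_exp2 -Rpow_mult_distr; rewrite (_ : Rmult (Rinv 2) 2 = R1); last by field.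
by rewrite pow1.
Qed.

Lemma sum_le (T : finType) (F G : T -> R) :
  (forall i, Rle (F i) (G i)) ->
  Rle (\big[Rplus/R0]_(i : T) F i) (\big[Rplus/R0]_(i : T) G i).
Proof.
move=> h; apply: (big_ind2 (fun x y => Rle x y)) => //; first lra.
by move=> x1 x2 y1 y2 h1 h2; lra.
Qed.

Lemma sum_ge0 (T : finType) (F : T -> R) :
  (forall i, Rle R0 (F i)) -> Rle R0 (\big[Rplus/R0]_(i : T) F i).
Proof.
move=> h; apply: (big_ind (fun x => Rle R0 x)) => //; first lra.
by move=> x y; lra.
Qed.

Lemma count_bound N (ps : seq nat) :
  (2 ^ N <= (\prod_(0 <= l < N) (if l \in ps then 1 else 2)) *
             2 ^ (count (mem ps) (iota 0 N)))%N.
Proof.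
elim: N => [|N IH]; first by rewrite big_geq.
rewrite big_nat_recr //.
have -> : iota 0 N.+1 = iota 0 N ++ [:: N] by rewrite -addn1 iotaD.
rewrite count_cat /= addn0.
case: (N \in ps) => /=; rewrite ?muln1 ?mul1n ?expnD ?expnS ?expn0 ?muln1; move: IH; set A := \prod_(0 <= i < N) _; set B := 2 ^ count _ _; move=> IH; nia.
Qed.

Lemma count_le N (ps : seq nat) : (count (mem ps) (iota 0 N) <= size ps)%N.
Proof.
rewrite -size_filter; apply: uniq_leq_size; first exact: filter_uniq (iota_uniq 0 N).
by move=> x; rewrite mem_filter => /andP[].
Qed.

Definition Cset N (ps : seq nat) (vals : nat -> bool) :=
  [pred c : row01 N | all (fun p => (p < N)%N ==> (at_ c p == vals p)) ps].

Lemma card_Cset N ps vals :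
  #|Cset N ps vals| = (\prod_(0 <= l < N) (if l \in ps then 1 else 2))%N.
Proof.
pose G (l : 'I_N) : pred bool := if (val l \in ps) then pred1 (vals l) else predT.
rewrite (eq_card (B := family G)); last first.
  move=> c; rewrite !inE; apply/allP/familyP.
    move=> h l; rewrite /G; case: ifP => hl; last by [].
    by have := h _ hl; rewrite ltn_ord /= (at_E _ c l) inE.
  move=> h p hp; apply/implyP => hpN.
  by have := h (Ordinal hpN); rewrite /G /= hp inE (at_E _ c (Ordinal hpN)).
rewrite card_family foldrE big_map big_enum big_mkord.
apply: eq_bigr => l _; rewrite /G; case: ifP => _.
  by rewrite card1.
by rewrite (eq_card (B := predT)) ?card_bool.
Qed.

Lemma coin_bound N ps vals :
  Rle (pow (/2) (size ps)) (Rmult (pow (/2) N) (INR #|Cset N ps vals|)).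
Proof.
have h := count_bound N ps.
have h2 := count_le N ps.
rewrite -(card_Cset N ps vals) in h.
have h3 : (2 ^ N <= #|Cset N ps vals| * 2 ^ size ps)%N.
  apply: (leq_trans h); apply: leq_mul => //; exact: leq_pexp2l.
move/leP: h3 => /le_INR; rewrite mult_INR !INR_exp2 => h4.
rewrite !pow_inv.
have p1 : Rlt R0 (pow 2 N) by apply: pow_lt; lra.
have p2 : Rlt R0 (pow 2 (size ps)) by apply: pow_lt; lra.
apply: (Rmult_le_reg_r (Rmult (pow 2 N) (pow 2 (size ps)))); first nra.
rewrite (_ : Rmult (Rinv (pow 2 (size ps))) (Rmult (pow 2 N) (pow 2 (size ps))) = pow 2 N); last by field; lra.
rewrite (_ : Rmult (Rmult (Rinv (pow 2 N)) (INR #|Cset N ps vals|)) (Rmult (pow 2 N) (pow 2 (size ps))) = Rmult (INR #|Cset N ps vals|) (pow 2 (size ps))); last by field; lra.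
exact: h4.
Qed.

Definition indb (b : bool) : R := if b then R1 else R0.

Lemma pattern_bound n (P : pred (row01 n)) ps vals : (0 < n)%N ->
  (forall c : row01 n.-1, c \in Cset n.-1 ps vals -> P (genrow c)) ->
  Rle (pow (/2) (size ps)) (\big[Rplus/R0]_(a : row01 n) Rmult (rowProb a) (indb (P a))).
Proof.
move=> n0 hP; rewrite expect //.
apply: (Rle_trans _ _ _ (coin_bound n.-1 ps vals)).
apply: Rmult_le_compat_l; first by apply: pow_le; lra.
rewrite -[X in Rle X _]Rmult_1_r -sum_const_pred big_mkcond /=.
apply: sum_le => c; rewrite /indb; case: ifP => hc; first by rewrite hP //; lra.
case: (P _); lra.
Qed.

Section Pat.
Variables (n D : nat).
Implicit Types (f : {ffun 'I_D.+1 -> 'I_n}) (a : row01 n).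

Definition P1 f a : bool := [forall i, a (f i)].
Definition P2 f a : bool := ~~ a (f ord0) && [forall i, (f i != f ord0) ==> a (f i)].

Definition ps1 f : seq nat := [seq (nat_of_ord (f i)).-1 | i <- enum 'I_D.+1].
Definition ps2 f : seq nat := (nat_of_ord (f ord0)).-2 :: ps1 f.

Lemma size_ps1 f : size (ps1 f) = D.+1.
Proof. by rewrite size_map size_enum_ord. Qed.

Lemma Cset_at N ps vals (c : row01 N) p : c \in Cset N ps vals -> p \in ps -> (p < N)%N ->
  at_ c p = vals p.
Proof. by rewrite inE => /allP h hp hN; have := h p hp; rewrite hN => /eqP. Qed.

Lemma P1_ok f (c : row01 n.-1) : c \in Cset n.-1 (ps1 f) (fun _ => true) -> P1 f (genrow c).
Proof.
move=> hc; apply/forallP => i; rewrite -at_E at_genrow //.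
have hs := ltn_ord (f i).
case e: (nat_of_ord (f i)) => [|s] //=.
rewrite (Cset_at hc) ?orbT //; last by lia.
by apply/mapP; exists i; rewrite ?mem_enum // e.
Qed.

Lemma P2_ok f (c : row01 n.-1) : (nat_of_ord (f ord0) != 0)%N ->
  c \in Cset n.-1 (ps2 f) (fun p => p != (nat_of_ord (f ord0)).-1) -> P2 f (genrow c).
Proof.
move=> hj hc.
have in1 : forall i, (nat_of_ord (f i)).-1 \in ps2 f.
  by move=> i; rewrite inE; apply/orP; right; apply/mapP; exists i; rewrite ?mem_enum.
set j := nat_of_ord (f ord0) in hj hc in1 *.
have hjn : (j < n)%N by exact: ltn_ord.
apply/andP; split.
  rewrite -at_E at_genrow // -/j.
  case ej: j hj => [|j'] // _ /=.
  have -> : at_ c j' = false.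
    rewrite (Cset_at hc) //; last by lia.
      by rewrite ej /= eqxx.
    by have := in1 ord0; rewrite -/j ej.
  rewrite orbF; case: j' ej => [|j''] ej //=.
  rewrite (Cset_at hc) ?orbT //; last by lia.
    by apply/eqP; lia.
  by rewrite /ps2 inE -/j ej eqxx.
apply/forallP => i; apply/implyP => hi.
rewrite -at_E at_genrow //.
have hs := ltn_ord (f i).
case e: (nat_of_ord (f i)) => [|s] //=.
have hsj : s != j.-1.
  apply/eqP => h; move/eqP: hi; apply; apply: val_inj; rewrite /= -/j; lia.
rewrite (Cset_at hc) ?hsj ?orbT //; last by lia.
by have := in1 i; rewrite e.
Qed.
End Pat.

Lemma sum_sub (T : finType) (F G : T -> R) :
  \big[Rplus/R0]_(i : T) (Rminus (F i) (G i)) =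
  Rminus (\big[Rplus/R0]_(i : T) F i) (\big[Rplus/R0]_(i : T) G i).
Proof.
rewrite /Rminus big_split /=; congr Rplus.
symmetry; apply: (big_morph Ropp (id1 := R0) (op1 := Rplus)); [move=> a b; ring | ring].
Qed.

Lemma nonzeroF r : nonzero r = false -> r = R0.
Proof. by rewrite /nonzero; case: Req_EM_T. Qed.

Lemma nonzeroT r : nonzero r = true -> r <> R0.
Proof. by rewrite /nonzero; case: Req_EM_T. Qed.

Lemma nonzero0 r : r = R0 -> nonzero r = false.
Proof. by move=> ->; rewrite /nonzero; case: Req_EM_T. Qed.

Definition goodb D m n (A : mat01 m n) : bool :=
  [forall f : {ffun 'I_D.+1 -> 'I_n}, [exists i, P1 f (A i)] &&
     ((nat_of_ord (f ord0) != 0) ==> [exists i, P2 f (A i)])].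

Lemma cover D n (T : {pred 'I_n}) (j : 'I_n) : (#|T| <= D)%N ->
  exists f : {ffun 'I_D.+1 -> 'I_n}, f ord0 = j /\ forall t, t \in T -> exists i, f i = t.
Proof.
move=> hT; exists [ffun i : 'I_D.+1 => nth j (j :: enum T) i]; split; first by rewrite ffunE.
move=> t ht.
have hin : t \in j :: enum T by rewrite inE mem_enum ht orbT.
have hi : (index t (j :: enum T) < D.+1)%N.
  apply: (leq_trans (n := size (j :: enum T))); first by rewrite index_mem.
  by rewrite /= -cardE.
by exists (Ordinal hi); rewrite ffunE /= nth_index.
Qed.

Lemma good_ident k m n (A : mat01 m n) : goodb (2 * k) A -> identifies k A.
Proof.
move=> /forallP hg x1 x2 s1 s2 hne heq.
pose x j := Rminus (x1 j) (x2 j).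
have dot0 : forall i, \big[Rplus/R0]_(j : 'I_n) (if A i j then x j else R0) = R0.
  move=> i; have := congr1 (fun F => F i) heq; rewrite /mulv /= => e.
  rewrite (eq_bigr (fun j => Rminus (if A i j then x1 j else R0) (if A i j then x2 j else R0))).
    by rewrite sum_sub e; apply: Rminus_diag_eq.
  by move=> j _; rewrite /x; case: (A i j); ring.
pose T := [pred j | nonzero (x j)].
have hT : (#|T| <= 2 * k)%N.
  apply: (leq_trans (n := #|[predU [pred j | nonzero (x1 j)] & [pred j | nonzero (x2 j)]]|)).
    apply: subset_leq_card; apply/subsetP => j; rewrite !inE.
    case e1: (nonzero (x1 j)) => //; case e2: (nonzero (x2 j)) => //.
    by rewrite /x (nonzeroF e1) (nonzeroF e2) nonzero0 //; ring.
  apply: leq_trans (leq_addr #|[predI [pred j | nonzero (x1 j)] & [pred j | nonzero (x2 j)]]| _) _.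
  rewrite cardUI mul2n -addnn; exact: leq_add.
have xz : forall j, j \notin T -> x j = R0 by move=> j; rewrite inE => /negbTE/nonzeroF.
case: (pickP T) => [j0 hj0 | hnone]; last first.
  apply: hne; apply: functional_extensionality => j.
  have := xz j (negbT (hnone j)); rewrite /x; lra.
case: (pickP [pred j | nonzero (x j) && (nat_of_ord j != 0)%N]) => [j hj | hno].
  move: hj => /andP [hxj hj].
  have [f [f0 fc]] := cover j hT.
  have /andP [/existsP [i1 h1] h2] := hg f.
  move: h2; rewrite f0 hj => /existsP [i2 h2].
  move: h1 h2 => /forallP h1 /andP [hb0 /forallP hb].
  have := dot0 i1; have := dot0 i2.
  have key : \big[Rplus/R0]_(j' : 'I_n)
     Rminus (if A i1 j' then x j' else R0) (if A i2 j' then x j' else R0) = x j.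
    rewrite -(big_pred1_eq (idx:=R0) Rplus j (fun j' => x j')) big_mkcond /=.
    apply: eq_bigr => j' _; case: eqP => [->|ne].
      by have := h1 ord0; rewrite f0 => ->; move: hb0; rewrite f0 => /negbTE ->; ring.
    case ht: (j' \in T); last by rewrite xz ?ht //; case: (A _ _); case: (A _ _); ring.
    have [i hi] := fc _ ht.
    have := h1 i; have := hb i; rewrite hi f0.
    have -> : (j' != j) by apply/eqP.
    by move=> /= -> ->; ring.
  move=> e2 e1; apply: (nonzeroT hxj); rewrite -key sum_sub e1 e2; ring.
have hj0' : forall j, j \in T -> j = j0.
  move=> j hj; apply: val_inj.
  have e1 : nonzero (x j) by exact hj.
  have e0 : nonzero (x j0) by exact hj0.
  have := hno j; have := hno j0; rewrite /= e1 e0 /= => /negbFE/eqP -> /negbFE/eqP ->.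
  by [].
have [f [f0 fc]] := cover j0 hT.
have /andP [/existsP [i1 /forallP h1] _] := hg f.
have e2 : \big[Rplus/R0]_(j' < n) (if A i1 j' then x j' else R0) = x j0.
  rewrite -(big_pred1_eq (idx:=R0) Rplus j0 (fun j' => x j')) big_mkcond /=.
  apply: eq_bigr => j' _; case: eqP => [->|ne].
    by have := h1 ord0; rewrite f0 => ->.
  case ht: (j' \in T); first by move: ne; rewrite (hj0' _ ht).
  by rewrite xz ?ht //; case: (A _ _).
apply: (nonzeroT hj0); rewrite -e2; exact: dot0 i1.
Qed.

Lemma prod_ind (I : finType) (b : I -> bool) :
  \big[Rmult/R1]_(i : I) indb (b i) = indb [forall i, b i].
Proof.
case: (boolP [forall i, b i]) => [/forallP h | ].
  by rewrite big1 // => i _; rewrite h.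
rewrite negb_forall => /existsP [i hi].
by rewrite (bigD1 i) //= (negbTE hi) /indb Rmult0r.
Qed.

Lemma mat_sum m n (F : row01 n -> R) :
  \big[Rplus/R0]_(A : mat01 m n) \big[Rmult/R1]_(i < m) F (A i) =
  pow (\big[Rplus/R0]_(a : row01 n) F a) m.
Proof.
rewrite -iter_mult -big_const_ord.
by rewrite (bigA_distr_bigA (fun (i : 'I_m) (a : row01 n) => F a)).
Qed.

Lemma miss_prob m n (P : pred (row01 n)) :
  \big[Rplus/R0]_(A : mat01 m n) Rmult (matProb A) (indb (~~ [exists i, P (A i)])) =
  pow (\big[Rplus/R0]_(a : row01 n) Rmult (rowProb a) (indb (~~ P a))) m.
Proof.
rewrite -mat_sum; apply: eq_bigr => A _.
by rewrite big_split /= prod_ind negb_exists.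
Qed.

Lemma mat_total m n : (0 < n)%N -> \big[Rplus/R0]_(A : mat01 m n) matProb A = R1.
Proof.
move=> n0; rewrite /matProb mat_sum total_mass //; exact: pow1.
Qed.

Lemma rowProb_ge0 n (a : row01 n) : Rle R0 (rowProb a).
Proof.
rewrite /rowProb; apply: Rmult_le_pos; first by case: (at_ a 0); lra.
apply: (big_ind (fun x => Rle R0 x)); first lra.
  by move=> x y; apply: Rmult_le_pos.
by move=> l _; rewrite /trans; case: (at_ a l); case: (at_ a l.+1); try lra; left; apply: Rinv_0_lt_compat; simpl; lra.
Qed.

Lemma matProb_ge0 m n (A : mat01 m n) : Rle R0 (matProb A).
Proof.
apply: (big_ind (fun x => Rle R0 x)); first lra.
  by move=> x y; apply: Rmult_le_pos.
by move=> i _; exact: rowProb_ge0.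
Qed.

Lemma ind_ge0 b : Rle R0 (indb b). Proof. by case: b; rewrite /indb; lra. Qed.

Lemma row_miss n (P : pred (row01 n)) p : (0 < n)%N ->
  Rle p (\big[Rplus/R0]_(a : row01 n) Rmult (rowProb a) (indb (P a))) ->
  Rle R0 (\big[Rplus/R0]_(a : row01 n) Rmult (rowProb a) (indb (~~ P a))) /\
  Rle (\big[Rplus/R0]_(a : row01 n) Rmult (rowProb a) (indb (~~ P a))) (Rminus 1 p).
Proof.
move=> n0 hp; split.
  apply: sum_ge0 => a; apply: Rmult_le_pos; [exact: rowProb_ge0 | exact: ind_ge0].
have : \big[Rplus/R0]_(a : row01 n) Rmult (rowProb a) (indb (~~ P a)) =
       Rminus (\big[Rplus/R0]_(a : row01 n) rowProb a)
              (\big[Rplus/R0]_(a : row01 n) Rmult (rowProb a) (indb (P a))).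
  by rewrite -sum_sub; apply: eq_bigr => a _; rewrite /indb; case: (P a) => /=; ring.
rewrite total_mass // => ->; lra.
Qed.

Definition tfun D n m (f : {ffun 'I_D.+1 -> 'I_n}) (A : mat01 m n) : R :=
  Rplus (indb (~~ [exists i, P1 f (A i)]))
        (indb ((nat_of_ord (f ord0) != 0)%N && ~~ [exists i, P2 f (A i)])).

Lemma tfun_ge0 D n m f (A : mat01 m n) : Rle R0 (@tfun D n m f A).
Proof. rewrite /tfun; have := ind_ge0 (~~ [exists i, P1 f (A i)]); have := ind_ge0 ((nat_of_ord (f ord0) != 0)%N && ~~ [exists i, P2 f (A i)]); lra. Qed.

Lemma pointwise k m n (A : mat01 m n) :
  Rle (Rminus 1 (indicator (identifies k A)))
      (\big[Rplus/R0]_(f : {ffun 'I_(2 * k).+1 -> 'I_n}) tfun f A).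
Proof.
rewrite /indicator; case: excluded_middle_informative => h.
  rewrite /Rminus Rplus_opp_r; apply: sum_ge0 => f; exact: tfun_ge0.
have : ~~ goodb (2 * k) A by apply/negP => hg; apply: h; exact: good_ident.
rewrite negb_forall => /existsP [f hf].
rewrite (bigD1 f) //=.
apply: (Rle_trans _ (Rplus (tfun f A) R0)); last first.
  apply: Rplus_le_compat_l.
  apply: (big_ind (fun x => Rle R0 x)); first lra.
    by move=> x y; lra.
  by move=> i _; exact: tfun_ge0.
suff : Rle 1 (tfun f A) by lra.
rewrite /tfun; move: hf; rewrite negb_and.
case: [exists i, P1 f (A i)] => /=.
  case: (_ != 0)%N => //= hx; rewrite hx /indb; lra.
move=> _; have := ind_ge0 ((nat_of_ord (f ord0) != 0)%N && ~~ [exists i, P2 f (A i)]); rewrite /indb /=; lra.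
Qed.

Lemma fail_bound k m n : (0 < n)%N ->
  Rle (Rminus 1 (probIdent k m n))
      (Rmult (INR (n ^ (2 * k).+1)) (Rmult 2 (pow (Rminus 1 (pow (/2) (2 * k).+2)) m))).
Proof.
move=> n0.
set q := Rminus 1 (pow (/2) (2 * k).+2).
have hp : Rle (pow (/2) (2 * k).+2) (pow (/2) (2 * k).+1).
  rewrite (_ : pow (/2) (2 * k).+2 = Rmult (/2) (pow (/2) (2 * k).+1)) //; have := pow_le (/2) (2 * k).+1 ltac:(lra); lra.
have hq0 : Rle R0 q.
  rewrite /q; have : Rle (pow (/2) (2 * k).+2) 1.
    rewrite -(pow1 (2 * k).+2); apply: pow_incr; lra.
  lra.
have e1 : Rminus 1 (probIdent k m n) =
  \big[Rplus/R0]_(A : mat01 m n) Rmult (matProb A) (Rminus 1 (indicator (identifies k A))).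
  rewrite (_ : IZR 1 = R1) // -{1}(mat_total m n0) /probIdent -sum_sub; apply: eq_bigr => A _; ring.
rewrite e1.
apply: (Rle_trans _ (\big[Rplus/R0]_(A : mat01 m n) Rmult (matProb A)
                      (\big[Rplus/R0]_(f : {ffun 'I_(2 * k).+1 -> 'I_n}) tfun f A))).
  apply: sum_le => A; apply: Rmult_le_compat_l; first exact: matProb_ge0.
  exact: pointwise.
rewrite (eq_bigr (fun A => \big[Rplus/R0]_(f : {ffun 'I_(2 * k).+1 -> 'I_n}) Rmult (matProb A) (tfun f A))); last by move=> A _; rewrite big_distrr.
rewrite exchange_big /=.
apply: (Rle_trans _ (\big[Rplus/R0]_(f : {ffun 'I_(2 * k).+1 -> 'I_n}) Rmult 2 (pow q m))).
  apply: sum_le => f.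
  rewrite /tfun (eq_bigr (fun A : mat01 m n => Rplus (Rmult (matProb A) (indb (~~ [exists i, P1 f (A i)])))
      (Rmult (matProb A) (indb ((nat_of_ord (f ord0) != 0)%N && ~~ [exists i, P2 f (A i)]))))); last by move=> A _; rewrite /tfun /=; ring.
  rewrite big_split /=.
  have b1 : Rle (\big[Rplus/R0]_(A : mat01 m n) Rmult (matProb A) (indb (~~ [exists i, P1 f (A i)]))) (pow q m).
    rewrite miss_prob; apply: pow_incr.
    have pb := pattern_bound (P := P1 f) (ps := ps1 f) (vals := fun _ => true) n0 (fun c => @P1_ok _ _ f c).
    rewrite size_ps1 in pb.
    have [h1 h2] := row_miss (P := P1 f) n0 pb; rewrite /q; lra.
  rewrite (_ : Rmult 2 (pow q m) = Rplus (pow q m) (pow q m)); last ring.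
  apply: Rplus_le_compat; first exact: b1.
  case: (boolP (nat_of_ord (f ord0) != 0)%N) => hf0 /=; last first.
    rewrite big1; first by apply: pow_le.
    by move=> A _; rewrite /indb; ring.
  rewrite miss_prob; apply: pow_incr.
  have pb := pattern_bound (P := P2 f) (ps := ps2 f) (vals := fun p => p != (nat_of_ord (f ord0)).-1) n0 (fun c => @P2_ok _ _ f c hf0).
  rewrite /= size_ps1 in pb.
  have [h1 h2] := row_miss (P := P2 f) n0 pb; rewrite /q; change (pow (/2) (2 * k).+2) with (Rmult (/2) (pow (/2) (2 * k).+1)); lra.
rewrite big_const iter_plus card_ffun !card_ord; right; reflexivity.
Qed.

Lemma fact_bound j :
  (((2 * j).+1)`! * 2 ^ (2 * j + 4) < 2 ^ (4 * j.+1 * j.+1 + 2 * j.+1 - 1))%N.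
Proof.
elim: j => [|j IH]; first by [].
have e1 : ((2 * j.+1).+1 = (2 * j).+3)%N by lia.
rewrite e1 (factS (2 * j).+2) (factS (2 * j).+1).
have e2 : (2 * j.+1 + 4 = (2 * j + 4) + 2)%N by lia.
have e3 : (4 * j.+2 * j.+2 + 2 * j.+2 - 1 = (4 * j.+1 * j.+1 + 2 * j.+1 - 1) + (8 * j + 14))%N by lia.
rewrite e2 e3 (expnD 2 (2 * j + 4) 2) (expnD 2 _ (8 * j + 14)).
have ha : ((2 * j).+3 < 2 ^ (2 * j).+3)%N by apply: ltn_expl.
have hb : ((2 * j).+2 < 2 ^ (2 * j).+2)%N by apply: ltn_expl.
have hc : (2 ^ (2 * j).+3 * 2 ^ (2 * j).+2 * 2 ^ 2 <= 2 ^ (8 * j + 14))%N.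
  rewrite -!expnD; apply: leq_pexp2l => //; lia.
move: IH ha hb hc.
set F := ((2 * j).+1)`!; set X := 2 ^ (4 * j.+1 * j.+1 + 2 * j.+1 - 1).
set Y := 2 ^ (2 * j + 4); set Z := 2 ^ (8 * j + 14).
set A := 2 ^ (2 * j).+3; set B := 2 ^ (2 * j).+2.
rewrite (_ : 2 ^ 2 = 4)%N //.
move=> IH ha hb hc.
have hd : ((2 * j).+3 * (2 * j).+2 * 4 <= Z)%N.
  apply: leq_trans hc; apply: leq_mul => //; apply: leq_mul; lia.
nia.
Qed.

Lemma INR_expn a b : INR (a ^ b) = pow (INR a) b.
Proof. elim: b => [|b IH] //=. by rewrite expnS mult_INR IH. Qed.

Lemma exp_pow' x m : pow (exp x) m = exp (Rmult (INR m) x).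
Proof.
elim: m => [|m IH]; first by rewrite /= Rmult_0_l exp_0.
change (pow (exp x) m.+1) with (Rmult (exp x) (pow (exp x) m)).
by rewrite IH -exp_plus S_INR; congr exp; ring.
Qed.

Lemma gk_big k : (1 <= k)%N ->
  Rlt (INR (2 * k).+1) (Rmult (pow (/2) (2 * k).+2) (gk k)).
Proof.
move=> hk; case: k hk => [|j] // _.
have h := fact_bound j.
move/ltP: h => /lt_INR; rewrite mult_INR !INR_expn => h.
rewrite /gk (_ : INR 2 = IZR 2) in h *; last by simpl; lra.
have ef : (2 * j.+1 - 1 = (2 * j).+1)%N by lia.
rewrite ef.
have e4 : (2 * j + 4 = (2 * j.+1).+2)%N by lia.
rewrite e4 in h.
have hF : Rlt R0 (INR ((2 * j).+1)`!) by apply: lt_0_INR; apply/ltP; exact: fact_gt0.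
have hP : Rlt R0 (pow 2 (2 * j.+1).+2) by apply: pow_lt; lra.
have hD : Rlt R0 (INR (2 * j.+1).+1) by apply: lt_0_INR; lia.
have -> : (2 * j.+1 + 1 = (2 * j.+1).+1)%N by lia.
rewrite pow_inv /Rdiv.
set F := INR _ in h hF *; set P := pow 2 _ in h hP *; set E := pow 2 _ in h *.
set D := INR _ in hD *.
apply: (Rmult_lt_reg_r (Rmult F P)); first nra.
rewrite (_ : Rmult (Rmult (/P) (Rmult (Rmult D E) (/F))) (Rmult F P) = Rmult D E); last by field; lra.
nra.
Qed.

Lemma exp_mono x y : Rle x y -> Rle (exp x) (exp y).
Proof. move=> [h|->]; [left; exact: exp_increasing | right; reflexivity]. Qed.

Lemma probIdent_le1 k m n : (0 < n)%N -> Rle (probIdent k m n) R1.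
Proof.
move=> n0; rewrite -(mat_total m n0) /probIdent; apply: sum_le => A.
have := matProb_ge0 A; rewrite /indicator; case: excluded_middle_informative => ? h /=; nra.
Qed.

Lemma main3 k (hk : (1 <= k)%N) (m : nat -> nat) :
  (forall n : nat, Rge (INR (m n)) (Rmult (gk k) (ln (INR n)))) ->
  Un_cv (fun n => probIdent k (m n) n) R1.
Proof.
move=> hm.
set p := pow (/2) (2 * k).+2.
set c := Rminus (Rmult p (gk k)) (INR (2 * k).+1).
have hc : Rlt R0 c by rewrite /c /p; have := gk_big hk; lra.
have hp0 : Rlt R0 p by apply: pow_lt; lra.
have hp1 : Rle p 1.
  rewrite /p -(pow1 (2 * k).+2); apply: pow_incr; lra.
have bound : forall n, (0 < n)%N ->
    Rle (Rminus 1 (probIdent k (m n) n)) (Rmult 2 (exp (Rmult (- c) (ln (INR n))))).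
  move=> n n0.
  have hn : Rlt R0 (INR n) by apply: lt_0_INR; apply/ltP.
  apply: (Rle_trans _ _ _ (fail_bound k (m n) n0)).
  rewrite -/p.
  have hq : Rle (pow (Rminus 1 p) (m n)) (exp (Rmult (- p) (Rmult (gk k) (ln (INR n))))).
    apply: (Rle_trans _ (pow (exp (- p)) (m n))).
      apply: pow_incr; split; first lra.
      have := exp_ineq1 (- p) ltac:(lra); lra.
    rewrite exp_pow'; apply: exp_mono.
    have := hm n; nra.
  rewrite INR_expn -{1}(exp_ln (INR n) hn) exp_pow'.
  apply: (Rle_trans _ (Rmult (exp (Rmult (INR (2 * k).+1) (ln (INR n))))
                       (Rmult 2 (exp (Rmult (- p) (Rmult (gk k) (ln (INR n)))))))).
    apply: Rmult_le_compat_l; first by left; apply: exp_pos.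
    apply: Rmult_le_compat_l; lra.
  rewrite Rmult_comm Rmult_assoc -exp_plus; right; congr (Rmult 2 (exp _)).
  rewrite /c; ring.
move=> eps heps.
set L := Rdiv (ln (Rdiv 2 eps)) c.
have [N hN] := INR_archimed 1 (exp L) ltac:(lra).
exists N.+1 => n hnN.
have n0 : (0 < n)%N by apply/ltP; lia.
have hn : Rlt R0 (INR n) by apply: lt_0_INR; apply/ltP.
have hNn : Rlt (exp L) (INR n).
  have : Rle (INR N) (INR n) by apply: le_INR; lia.
  lra.
have hlog : Rlt L (ln (INR n)).
  rewrite -{1}(ln_exp L); apply: ln_increasing => //; exact: exp_pos.
have hexp : Rlt (exp (Rmult (- c) (ln (INR n)))) (Rdiv eps 2).
  apply: (Rlt_le_trans _ (exp (Rmult (- c) L))).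
    apply: exp_increasing; nra.
  right; rewrite /L (_ : Rmult (- c) (Rdiv (ln (Rdiv 2 eps)) c) = Ropp (ln (Rdiv 2 eps))); last by field; lra.
  rewrite exp_Ropp exp_ln; last by apply: Rdiv_lt_0_compat; lra.
  field; lra.
have := bound n n0; have := probIdent_le1 k (m n) n0.
rewrite /Rdist => h1 h2.
rewrite Rabs_left1; last lra.
lra.
Qed.

Theorem theorem3 (k : nat) (hk : (1 <= k)%N) :
  (forall (n : nat) (a : row01 n), (5 <= n)%N -> Rgt (rowProb a) R0 -> feasible a)
  /\
  (exists g : R,
     forall m : nat -> nat,
       (forall n : nat, Rge (INR (m n)) (Rmult g (ln (INR n)))) ->
       Un_cv (fun n => probIdent k (m n) n) R1)
  /\
  (forall m : nat -> nat,
     (forall n : nat, Rge (INR (m n)) (Rmult (gk k) (ln (INR n)))) ->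
     Un_cv (fun n => probIdent k (m n) n) R1).
Proof.
split; first by move=> n a hn hp; exact: feasible_part.
split; last by move=> m hm; exact: main3.
by exists (gk k) => m hm; exact: main3.
Qed.
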